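(* Let $N,k\ge1$ be integers and let $\varepsilon>0$, $A>0$, $c>0$. For $z=(x,y)\in\mathbb{R}^N\times\mathbb{R}^k$ set $\Theta(z)=c\,e^{-\varepsilon\sqrt{A+|x|^4+|y|^2}}$. Then $$\Delta_{\mathcal{G}}\Theta(z)\ge-\varepsilon\,[2(N+2)+k]\,\Theta(z)\qquad\text{for all } z\in\mathbb{R}^{N+k},$$ where $\Delta_{\mathcal{G}}=\Delta_x+|x|^2\Delta_y$.
   Context: $\Delta_x$ and $\Delta_y$ denote the Euclidean Laplacians in $x\in\mathbb{R}^N$ and $y\in\mathbb{R}^k$. *)

(* Defs.v *)
From HB Require Import structures.
From mathcomp Require Import all_boot all_order all_algebra.
From mathcomp Require Import all_classical all_reals all_analysis.
Set Implicit Arguments. Unset Strict Implicit. Unset Printing Implicit Defensive.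
Import Order.TTheory GRing.Theory Num.Theory.
Import numFieldNormedType.Exports.
Local Open Scope ring_scope.

Definition sqnorm (R : realType) (n : nat) (x : 'rV[R]_n) : R :=
  \sum_(i < n) x ord0 i ^+ 2.

Definition evec (R : realType) (n : nat) (i : 'I_n) : 'rV[R]_n := delta_mx 0 i.

Definition lap_x (R : realType) (N k : nat) (f : 'rV[R]_N -> 'rV[R]_k -> R)
  (x : 'rV[R]_N) (y : 'rV[R]_k) : R :=
  \sum_(i < N) derive1n 2 (fun t : R => f (x + t *: evec R i) y) 0.

Definition lap_y (R : realType) (N k : nat) (f : 'rV[R]_N -> 'rV[R]_k -> R)
  (x : 'rV[R]_N) (y : 'rV[R]_k) : R :=
  \sum_(j < k) derive1n 2 (fun t : R => f x (y + t *: evec R j)) 0.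

Definition grushin_lap (R : realType) (N k : nat) (f : 'rV[R]_N -> 'rV[R]_k -> R)
  (x : 'rV[R]_N) (y : 'rV[R]_k) : R :=
  lap_x f x y + sqnorm x * lap_y f x y.

Definition Theta (R : realType) (N k : nat) (c eps A : R)
  (x : 'rV[R]_N) (y : 'rV[R]_k) : R :=
  c * expR (- (eps * Num.sqrt (A + sqnorm x ^+ 2 + sqnorm y))).

(* Main.v *)
Require Import Defs.
From HB Require Import structures.
From mathcomp Require Import all_boot all_order all_algebra.
From mathcomp Require Import all_classical all_reals all_analysis.
From mathcomp Require Import ring lra.
Import Order.TTheory GRing.Theory Num.Theory.
Import numFieldNormedType.Exports.
Local Open Scope ring_scope.

Section G.
Variable R : realType.

Lemma dM (f g : R -> R) (x df dg : R) : is_derive x 1 f df -> is_derive x 1 g dg ->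
  is_derive x 1 (fun y => f y * g y) (f x * dg + g x * df).
Proof. move=> H1 H2; exact: (is_deriveM H1 H2). Qed.

Lemma dC (f : R -> R) (x df k : R) : is_derive x 1 f df ->
  is_derive x 1 (fun y => k * f y) (k * df).
Proof. move=> H1; exact: (is_deriveZ k H1). Qed.

Lemma dComp (f g : R -> R) (x a b : R) : is_derive (g x) 1 f a -> is_derive x 1 g b ->
  is_derive x 1 (fun y => f (g y)) (a * b).
Proof. move=> H1 H2; exact: (is_derive1_comp H1 H2). Qed.

Lemma dInv (f : R -> R) (x df : R) : f x != 0 -> is_derive x 1 f df ->
  is_derive x 1 (fun y => (f y)^-1) (- (f x) ^- 2 * df).
Proof. move=> H1 H2; exact: (is_deriveV H1 H2). Qed.

Lemma d1 (f : R -> R) (f' : R -> R) : (forall t : R, is_derive t 1 f (f' t)) -> derive1 f = f'.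
Proof. move=> H; apply/funext => t; rewrite derive1E; exact: derive_val. Qed.

Arguments dM {f g x df dg}.
Arguments dC {f x df} k.
Arguments dComp {f g x a b}.
Arguments dInv {f x df}.
Arguments d1 {f f'}.

Lemma gen (S S1 S2 : R -> R) (c eps : R) : 0 < c -> 0 < eps ->
  (forall t, 0 < S t) -> (forall t : R, is_derive t 1 S (S1 t)) ->
  (forall t : R, is_derive t 1 S1 (S2 t)) ->
  - (eps * c * expR (- (eps * Num.sqrt (S 0))) * S2 0 / (2 * Num.sqrt (S 0)))
  <= derive1n 2 (fun t => c * expR (- (eps * Num.sqrt (S t)))) 0.
Proof.
move=> c0 e0 HS dS dS1.
pose r := fun t => Num.sqrt (S t).
have r0 t : 0 < r t by rewrite sqrtr_gt0.
have dr (t : R) : is_derive t 1 r ((2 * Num.sqrt (S t))^-1 * S1 t).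
  exact: (dComp (is_derive1_sqrt (HS t)) (dS t)).
pose E := fun t => expR ((- eps) * r t).
have dE (t : R) : is_derive t 1 E (expR ((-eps) * r t) * ((-eps) * ((2 * r t)^-1 * S1 t))).
  exact: (dComp (is_derive_expR _) (dC (-eps) (dr t))).
have -> : (fun t => c * expR (- (eps * Num.sqrt (S t)))) = (fun t => c * E t).
  by apply/funext => t; rewrite /E /r mulNr.
rewrite /derive1n /=.
have -> : derive1 (fun t => c * E t) = (fun t => (c * (- eps) / 2) * (E t * (S1 t * (r t)^-1))).
  rewrite (d1 (fun t => dC c (dE t))); apply/funext => t.
  rewrite /E invfM; field.
  by rewrite (gt_eqF (r0 t)).
have dg := dC (c * (- eps) / 2) (dM (dE 0) (dM (dS1 0) (dInv (lt0r_neq0 (r0 0)) (dr 0)))).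
rewrite derive1E (@derive_val _ _ _ _ _ _ _ dg).
rewrite /E -[Num.sqrt (S 0)]/(r 0) -(mulNr eps (r 0)).
have := expR_gt0 (- eps * r 0).
move: (expR (- eps * r 0)) => x x0.
have := r0 0; move: (r 0) (S1 0) (S2 0) => a s1 s2 a0.
set w := a^-1.
have w0 : 0 < w by rewrite invr_gt0.
have -> : (2 * a)^-1 = w / 2 by rewrite invfM mulrC.
have -> : a ^- 2 = w ^+ 2 by rewrite exprVn.
rewrite -/w.
have -> : c * - eps / 2 * (x * (s1 * (- w ^+ 2 * (w / 2 * s1)) + w * s2) + s1 * w * (x * (- eps * (w / 2 * s1))))
   = - (eps * c * x * s2 * (w / 2)) + (c * eps / 2) * x * (s1 ^+ 2 * w ^+ 3 / 2 + eps * s1 ^+ 2 * w ^+ 2 / 2) by ring.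
rewrite lerDl.
have hs := sqr_ge0 s1.
have hw2 : 0 <= w ^+ 2 by apply: exprn_ge0; apply: ltW.
have hw3 : 0 <= w ^+ 3 by apply: exprn_ge0; apply: ltW.
apply: mulr_ge0.
  apply: mulr_ge0; last exact: ltW.
  by apply: divr_ge0 => //; apply: mulr_ge0; apply: ltW.
apply: addr_ge0; apply: divr_ge0 => //; apply: mulr_ge0 => //.
by apply: mulr_ge0 => //; apply: ltW.
Qed.

Lemma dD (f g : R -> R) (x df dg : R) : is_derive x 1 f df -> is_derive x 1 g dg ->
  is_derive x 1 (fun y => f y + g y) (df + dg).
Proof. move=> H1 H2; exact: (is_deriveD H1 H2). Qed.

Arguments dD {f g x df dg}.

Lemma dcst (a x : R) : is_derive x 1 (fun _ : R => a) 0.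
Proof. exact: is_derive_cst. Qed.

Lemma did (x : R) : is_derive x 1 (fun y : R => y) 1.
Proof. exact: is_derive_id. Qed.

Lemma deq (f : R -> R) (x d d' : R) : is_derive x 1 f d -> d = d' -> is_derive x 1 f d'.
Proof. by move=> H <-. Qed.

Arguments deq {f x d d'}.

Lemma dsq (x : R) : is_derive x 1 (fun y : R => y ^+ 2) (2 * x).
Proof.
have -> : (fun y : R => y ^+ 2) = (fun y => y * y) by apply/funext => y; rewrite expr2.
by apply: deq (dM (did x) (did x)) _; ring.
Qed.

Lemma dquad (a b t : R) : is_derive t 1 (fun t => a + b * t + t ^+ 2) (b + 2 * t).
Proof.
by apply: deq (dD (dD (dcst a t) (dC b (did t))) (dsq t)) _; ring.
Qed.

Lemma dlin (b t : R) : is_derive t 1 (fun t => b + 2 * t) 2.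
Proof. by apply: deq (dD (dcst b t) (dC 2 (did t))) _; ring. Qed.

Lemma dS_x (A' a b t : R) : is_derive t 1 (fun t => A' + (a + b * t + t ^+ 2) ^+ 2)
   (2 * (a + b * t + t ^+ 2) * (b + 2 * t)).
Proof.
apply: deq (dD (dcst A' t) (dComp (dsq _) (dquad a b t))) _; ring.
Qed.

Lemma dS1_x (a b t : R) : is_derive t 1 (fun t => 2 * (a + b * t + t ^+ 2) * (b + 2 * t))
   (2 * (b + 2 * t) ^+ 2 + 4 * (a + b * t + t ^+ 2)).
Proof.
apply: deq (dM (dC 2 (dquad a b t)) (dlin b t)) _; ring.
Qed.

Lemma sqnorm_shift n (x : 'rV[R]_n) (i : 'I_n) (t : R) :
  sqnorm (x + t *: evec R i) = sqnorm x + (2 * x ord0 i) * t + t ^+ 2.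
Proof.
rewrite /sqnorm /evec (bigD1 i) //= [in RHS](bigD1 i) //=.
rewrite !mxE eqxx /=.
have -> : \sum_(j < n | j != i) (x + t *: delta_mx 0 i) ord0 j ^+ 2 = \sum_(j < n | j != i) x ord0 j ^+ 2.
  by apply: eq_bigr => j ji; rewrite !mxE (negbTE ji) andbF mulr0 addr0.
ring.
Qed.
End G.

Arguments dquad {R}.
Arguments gen {R S S1 S2 c eps}.
Arguments sqnorm_shift {R n}.
Arguments dlin {R}.
Arguments dS_x {R}.
Arguments dS1_x {R}.

Theorem lemma4 (R : realType) (N k : nat) (eps A c : R) :
  (1 <= N)%N -> (1 <= k)%N -> 0 < eps -> 0 < A -> 0 < c ->
  forall (x : 'rV[R]_N) (y : 'rV[R]_k),
    - (eps * (2 * (N + 2) + k)%:R) * Theta c eps A x y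
      <= grushin_lap (Theta c eps A) x y.
Proof.
move=> hN hk e0 A0 c0 x y.
set u := sqnorm x; set B := sqnorm y.
set s := Num.sqrt (A + u ^+ 2 + B).
set E0 := expR (- (eps * s)).
have -> : Theta c eps A x y = c * E0 by [].
have sqge n (z : 'rV[R]_n) : 0 <= sqnorm z by apply: sumr_ge0 => i _; apply: sqr_ge0.
have u0 : 0 <= u by apply: sqge.
have B0 : 0 <= B by apply: sqge.
have Sp : 0 < A + u ^+ 2 + B.
  by have := sqr_ge0 u; lra.
have s0 : 0 < s by rewrite sqrtr_gt0.
have s2 : s ^+ 2 = A + u ^+ 2 + B by rewrite sqr_sqrtr // ltW.
have us : u <= s by nra.
have E00 : 0 < E0 by apply: expR_gt0.
set P := eps * c * E0.
have P0 : 0 < P by rewrite /P !mulr_gt0.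
have Hx i : - (P * (8 * x ord0 i ^+ 2 + 4 * u) / (2 * s)) <=
    derive1n 2 (fun t => Theta c eps A (x + t *: evec R i) y) 0.
  pose S := fun t => (A + B) + (u + (2 * x ord0 i) * t + t ^+ 2) ^+ 2.
  pose S1 := fun t => 2 * (u + (2 * x ord0 i) * t + t ^+ 2) * ((2 * x ord0 i) + 2 * t).
  pose S2 := fun t => 2 * ((2 * x ord0 i) + 2 * t) ^+ 2 + 4 * (u + (2 * x ord0 i) * t + t ^+ 2).
  have -> : (fun t => Theta c eps A (x + t *: evec R i) y) = (fun t => c * expR (- (eps * Num.sqrt (S t)))).
    apply/funext => t; rewrite /Theta sqnorm_shift -/u -/B /S.
    congr (c * expR (- (eps * Num.sqrt _))); ring.
  have HS t : 0 < S t.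
    by rewrite /S; have := sqr_ge0 (u + 2 * x ord0 i * t + t ^+ 2); lra.
  apply: le_trans (gen c0 e0 HS (fun t => dS_x _ _ _ t) (fun t => dS1_x _ _ t)).
  have -> : S 0 = A + u ^+ 2 + B by rewrite /S; ring.
  have -> : 2 * (2 * x ord0 i + 2 * 0) ^+ 2 + 4 * (u + 2 * x ord0 i * 0 + 0 ^+ 2) = 8 * x ord0 i ^+ 2 + 4 * u by ring.
  by rewrite -/s -/E0 -/P.
have Hy j : - (P * 2 / (2 * s)) <=
    derive1n 2 (fun t => Theta c eps A x (y + t *: evec R j)) 0.
  pose S := fun t => (A + u ^+ 2 + B) + (2 * y ord0 j) * t + t ^+ 2.
  have -> : (fun t => Theta c eps A x (y + t *: evec R j)) = (fun t => c * expR (- (eps * Num.sqrt (S t)))).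
    apply/funext => t; rewrite /Theta sqnorm_shift -/u -/B /S.
    congr (c * expR (- (eps * Num.sqrt _))); ring.
  have HS t : 0 < S t.
    have := sqnorm_shift y j t; have := sqge _ (y + t *: evec R j); have := sqr_ge0 u.
    rewrite /S -/B; lra.
  apply: le_trans (gen c0 e0 HS (fun t => dquad _ _ t) (fun t => dlin _ t)).
  have -> : S 0 = A + u ^+ 2 + B by rewrite /S; ring.
  by rewrite -/s -/E0 -/P.
have LX : - (P * (8 * u + 4 * u * N%:R) / (2 * s)) <= lap_x (Theta c eps A) x y.
  rewrite /lap_x.
  apply: le_trans (_ : \sum_(i < N) - (P * (8 * x ord0 i ^+ 2 + 4 * u) / (2 * s)) <= _); last first.
    by apply: ler_sum => i _; exact: Hx i.
  rewrite sumrN -mulr_suml -mulr_sumr big_split /= -mulr_sumr sumr_const card_ord -/u.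
  by rewrite -[4 * u *+ N]mulr_natr; apply: le_refl.
have LY : - (P * 2 / (2 * s) * k%:R) <= lap_y (Theta c eps A) x y.
  rewrite /lap_y.
  apply: le_trans (_ : \sum_(j < k) - (P * 2 / (2 * s)) <= _); last first.
    by apply: ler_sum => j _; exact: Hy j.
  by rewrite sumrN sumr_const card_ord -(mulr_natr (P * 2 / (2 * s)) k); apply: le_refl.
rewrite /grushin_lap -/u.
have LY' := ler_wpM2l u0 LY.
set w := u / s.
have w0 : 0 <= w by apply: divr_ge0 => //; apply: ltW.
have w1 : w <= 1 by rewrite /w ler_pdivrMr // mul1r.
have sn : s != 0 by apply: lt0r_neq0.
have e1 : P * (8 * u + 4 * u * N%:R) / (2 * s) = P * w * (4 + 2 * N%:R) by rewrite /w; field.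
have e2 : u * - (P * 2 / (2 * s) * k%:R) = - (P * w * k%:R) by rewrite /w; field.
rewrite e1 in LX; rewrite e2 in LY'.
have K : 0 <= P * (1 - w) * (4 + 2 * N%:R + k%:R).
  apply: mulr_ge0; first by apply: mulr_ge0; [apply: ltW | rewrite subr_ge0].
  by apply: addr_ge0; [apply: addr_ge0 => //; apply: mulr_ge0|].
rewrite natrD natrM natrD /P in K LX LY' *.
lra.
Qed.
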